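(* Let $n\ge2$ and let $A=(a_{ij})$ be a real $n\times n$ matrix, and $q>0$. Then $$|A_q|=\frac{|(A^1_1)_q|\,|(A^n_n)_q|-q^{\,n-1}\,|(A^1_n)_q|\,|(A^n_1)_q|}{|(A^{1n}_{1n})_q|},$$ provided $|(A^{1n}_{1n})_q|\ne0$.
   Context: $|\cdot|$ denotes the determinant, and the determinant of the empty $0\times0$ matrix is $1$. For an $m\times m$ matrix $M=(m_{ij})$ and $q>0$, $M_q=(q^{(i-j)^2/2}m_{ij})_{i,j=1}^m$, where indices are always the positions $1,\dots,m$ in $M$. $A^i_j$ denotes the $(n-1)\times(n-1)$ matrix obtained from $A$ by deleting row $i$ and column $j$ (reindexed from $1$), and $A^{1n}_{1n}$ the $(n-2)\times(n-2)$ matrix obtained by deleting rows $1,n$ and columns $1,n$. *)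

(* Defs.v *)
(* Real numbers are modelled by an arbitrary real closed field R. *)
From HB Require Import structures.
From mathcomp Require Import all_boot all_order all_algebra.
Set Implicit Arguments. Unset Strict Implicit. Unset Printing Implicit Defensive.
Import Order.TTheory GRing.Theory Num.Theory.
Local Open Scope ring_scope.

Definition natdist (i j : nat) : nat := if (i <= j)%N then (j - i)%N else (i - j)%N.

(* M_q = (q^{(i-j)^2/2} m_ij); q^{k/2} is written (sqrt q)^k. *)
Definition qmx (R : rcfType) (m : nat) (q : R) (M : 'M[R]_m) : 'M[R]_m :=
  \matrix_(i < m, j < m) (Num.sqrt q ^+ (natdist i j ^ 2)%N * M i j).

(* For an (n+2)x(n+2) matrix A, the minors used in the statement. Positions
   1 and n of the paper are ord0 and ord_max (0-based). *)
Definition minor (R : rcfType) (m : nat) (A : 'M[R]_m.+1) (i j : 'I_m.+1) : 'M[R]_m :=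
  row' i (col' j A).

Definition minor1n (R : rcfType) (m : nat) (A : 'M[R]_m.+2) : 'M[R]_m :=
  row' ord0 (col' ord0 (row' ord_max (col' ord_max A))).

(* Main.v *)
Require Import Defs.
From HB Require Import structures.
From mathcomp Require Import all_boot all_order all_algebra ring zify.
From mathcomp Require Import fingroup perm.
Import Order.TTheory GRing.Theory Num.Theory.
Local Open Scope ring_scope.
Set Implicit Arguments. Unset Strict Implicit. Unset Printing Implicit Defensive.
Lemma det_mxsub_perm (F : comUnitRingType) k (f g : 'I_k -> 'I_k)
  (fi : injective f) (gi : injective g) (A : 'M[F]_k) :
  \det (mxsub f g A) = (-1) ^+ perm fi * (-1) ^+ perm gi * \det A.
Proof.
have -> : mxsub f g A = perm_mx (perm fi) *m A *m perm_mx (perm gi)^-1.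
  by rewrite -row_permE -col_permE; apply/matrixP => i j; rewrite !mxE !permE.
by rewrite !det_mulmx !det_perm odd_permV mulrAC.
Qed.

Lemma sign_sq (F : comUnitRingType) (b : bool) : (-1) ^+ b * (-1) ^+ b = 1 :> F.
Proof. by case: b; rewrite ?expr1 ?expr0 ?mulrNN ?mulr1. Qed.

Lemma schur (F : fieldType) n1 n2 (X : 'M[F]_(n1 + n2)) :
  \det (drsubmx X) != 0 ->
  \det X = \det (ulsubmx X - ursubmx X *m invmx (drsubmx X) *m dlsubmx X)
           * \det (drsubmx X).
Proof.
move=> hD.
have uD : drsubmx X \in unitmx by rewrite unitmxE unitfE.
set D := drsubmx X; set U := ursubmx X; set L := dlsubmx X; set P := ulsubmx X.
have eX : X = block_mx P U L D by rewrite submxK.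
have -> : X = block_mx 1%:M (U *m invmx D) 0 1%:M *m block_mx (P - U *m invmx D *m L) 0 L D.
  rewrite mulmx_block !mul1mx !mul0mx !add0r subrK -mulmxA (mulVmx uD) mulmx1 -eX.
  by [].
by rewrite det_mulmx det_ublock det_lblock !det1 !mul1r.
Qed.

Lemma det_mx22 (F : comUnitRingType) (M : 'M[F]_2) :
  \det M = M 0 0 * M 1 1 - M 0 1 * M 1 0.
Proof.
rewrite (expand_det_row _ 0) !big_ord_recl big_ord0 addr0 /cofactor !det_mx11 !mxE /=.
rewrite !expr0 !mul1r expr1 mulN1r.
rewrite mulrN; congr (M _ _ * M _ _ - M _ _ * M _ _); exact: val_inj.
Qed.
Section Idx.
Variable m : nat.
Definition mid (k : 'I_m) : 'I_m.+2 := lift ord_max (lift ord0 k).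
Arguments mid : simpl never.
Definition sel (a : 'I_m.+2) (i : 'I_(1 + m)) : 'I_m.+2 :=
  match split i with inl _ => a | inr k => mid k end.
Definition top (i : 'I_2) : 'I_m.+2 := if nat_of_ord i == 0%N then ord0 else ord_max.
Definition sel2 (i : 'I_(2 + m)) : 'I_m.+2 :=
  match split i with inl a => top a | inr k => mid k end.
Definition hh (i : 'I_(1 + m)) : 'I_m.+1 :=
  match split i with inl _ => ord_max | inr k => widen_ord (leqnSn m) k end.
Definition hh' (i : 'I_(1 + m)) : 'I_m.+1 :=
  match split i with inl _ => ord0 | inr k => lift ord0 k end.

Lemma vmid k : nat_of_ord (mid k) = k.+1.
Proof. by rewrite /mid /= /bump leq0n /= ltnS leqNgt ltn_ord. Qed.

Lemma vsel a i : nat_of_ord (sel a i) = if nat_of_ord i == 0%N then nat_of_ord a else nat_of_ord i.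
Proof.
rewrite /sel; case: splitP => [j ->|k ->]; first by rewrite (ord1 j).
by rewrite vmid.
Qed.

Lemma vsel2 i : nat_of_ord (sel2 i) =
  if nat_of_ord i == 0%N then 0%N else if nat_of_ord i == 1%N then m.+1 else (nat_of_ord i).-1.
Proof.
rewrite /sel2 /top; case: splitP => [j ->|k ->].
  by case: j => [[|[|j]] //].
by rewrite vmid.
Qed.

Lemma vhh i : nat_of_ord (hh i) = if nat_of_ord i == 0%N then m else (nat_of_ord i).-1.
Proof. by rewrite /hh; case: splitP => [j ->|k ->]; first by rewrite (ord1 j). Qed.

Lemma vhh' i : nat_of_ord (hh' i) = if nat_of_ord i == 0%N then 0%N else nat_of_ord i.
Proof. by rewrite /hh'; case: splitP => [j ->|k ->]; first by rewrite (ord1 j). Qed.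

Lemma sel2_inj : injective sel2.
Proof.
move=> i j /(congr1 val) /=; rewrite !vsel2 => e; apply/val_inj => /=.
have := ltn_ord i; have := ltn_ord j.
move: e; repeat (case: ifP => /eqP ?); lia.
Qed.

Lemma hh_inj : injective hh.
Proof.
move=> i j /(congr1 val) /=; rewrite !vhh => e; apply/val_inj => /=.
have := ltn_ord i; have := ltn_ord j.
move: e; repeat (case: ifP => /eqP ?); lia.
Qed.

Lemma hh'_inj : injective hh'.
Proof.
move=> i j /(congr1 val) /=; rewrite !vhh' => e; apply/val_inj => /=.
move: e; repeat (case: ifP => /eqP ?); lia.
Qed.

Lemma sel_l i : sel ord_max i = lift ord0 (hh i).
Proof.
apply/val_inj => /=; rewrite vsel vhh /=; have := ltn_ord i.
rewrite /bump; repeat (case: ifP => /eqP ?); lia.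
Qed.

Lemma sel_0 i : sel ord0 i = lift ord_max (hh' i).
Proof.
apply/val_inj => /=; rewrite vsel vhh' /= /bump; have := ltn_ord (hh' i); rewrite vhh'; repeat (case: ifP => /eqP ?); lia.
Qed.
End Idx.

Lemma sgaux (F : comUnitRingType) (x y s t : F) :
  s * s = 1 -> t * t = 1 -> x * y = (s * t * x) * (t * s * y).
Proof.
move=> hs ht; transitivity ((s * s) * (t * t) * (x * y)); first by rewrite hs ht !mul1r.
ring.
Qed.

Section DJ.
Variables (F : rcfType) (m : nat) (B : 'M[F]_m.+2).

Let sel_r (a : 'I_m.+2) (k : 'I_m) : sel a (rshift 1 k) = mid k.
Proof. apply/val_inj => /=; rewrite vsel /bump /=; have := ltn_ord k; repeat (case: ifP => /eqP ?); lia. Qed.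
Let sel_lo (a : 'I_m.+2) : sel a (lshift m 0) = a.
Proof. by apply/val_inj => /=; rewrite vsel. Qed.
Let sel2_r (k : 'I_m) : sel2 (rshift 2 k) = mid k.
Proof. apply/val_inj => /=; rewrite vsel2 /bump /=; have := ltn_ord k; repeat (case: ifP => /eqP ?); lia. Qed.
Let sel2_l (i : 'I_2) : sel2 (lshift m i) = top m i.
Proof.
apply/val_inj => /=; rewrite vsel2 /top /=.
by case: i => [[|[|i]] //] /=.
Qed.

Let D := minor1n B.
Let Y (a b : 'I_m.+2) := mxsub (sel a) (sel b) B.
Let X := mxsub (@sel2 m) (@sel2 m) B.
Let rw (a : 'I_m.+2) := \row_(k < m) B a (mid k).
Let cl (b : 'I_m.+2) := \col_(k < m) B (mid k) b.
Let sig (a b : 'I_m.+2) := B a b - (rw a *m invmx D *m cl b) 0 0.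

Let drY a b : drsubmx (Y a b) = D.
Proof. by apply/matrixP => i j; rewrite !mxE !sel_r. Qed.
Let drX : drsubmx X = D.
Proof. by apply/matrixP => i j; rewrite !mxE !sel2_r. Qed.
Let urY a b : ursubmx (Y a b) = rw a.
Proof. by apply/matrixP => i j; rewrite !mxE (ord1 i) sel_lo sel_r. Qed.
Let dlY a b : dlsubmx (Y a b) = cl b.
Proof. by apply/matrixP => i j; rewrite !mxE (ord1 j) sel_lo sel_r. Qed.

Let detY a b : \det D != 0 -> \det (Y a b) = sig a b * \det D.
Proof.
move=> hD; have hD' : \det (drsubmx (Y a b)) != 0 by rewrite drY.
rewrite (schur hD') drY urY dlY det_mx11 !mxE.
by rewrite !sel_lo /sig [in RHS]mxE.
Qed.

Let detX : \det D != 0 ->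
  \det X = (sig ord0 ord0 * sig ord_max ord_max - sig ord0 ord_max * sig ord_max ord0)
           * \det D.
Proof.
move=> hD; have hD' : \det (drsubmx X) != 0 by rewrite drX.
rewrite (schur hD') drX det_mx22; congr (_ * _).
have e i j : (ulsubmx X - ursubmx X *m invmx D *m dlsubmx X) i j
   = sig (top m i) (top m j).
  rewrite /sig !mxE !sel2_l; congr (_ - _).
  apply: eq_bigr => k _; congr (_ * _); last by rewrite !mxE sel2_l sel2_r.
  rewrite !mxE; apply: eq_bigr => k' _; by rewrite !mxE sel2_l sel2_r.
by rewrite !e.
Qed.

Lemma DJ : \det D != 0 ->
  \det B * \det D =
  \det (minor B ord0 ord0) * \det (minor B ord_max ord_max)
  - \det (minor B ord0 ord_max) * \det (minor B ord_max ord0).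
Proof.
move=> hD.
have eB : \det X = \det B.
  by rewrite /X (det_mxsub_perm (@sel2_inj m) (@sel2_inj m)) sign_sq mul1r.
have e00 : Y ord_max ord_max = mxsub (@hh m) (@hh m) (minor B ord0 ord0).
  by apply/matrixP => i j; rewrite !mxE !sel_l.
have ell : Y ord0 ord0 = mxsub (@hh' m) (@hh' m) (minor B ord_max ord_max).
  by apply/matrixP => i j; rewrite !mxE !sel_0.
have e0l : Y ord_max ord0 = mxsub (@hh m) (@hh' m) (minor B ord0 ord_max).
  by apply/matrixP => i j; rewrite !mxE sel_l sel_0.
have el0 : Y ord0 ord_max = mxsub (@hh' m) (@hh m) (minor B ord_max ord0).
  by apply/matrixP => i j; rewrite !mxE sel_l sel_0.
have d00 := detY ord_max ord_max hD; rewrite e00 (det_mxsub_perm (@hh_inj m) (@hh_inj m)) sign_sq mul1r in d00.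
have dll := detY ord0 ord0 hD; rewrite ell (det_mxsub_perm (@hh'_inj m) (@hh'_inj m)) sign_sq mul1r in dll.
have d0l := detY ord_max ord0 hD; rewrite e0l (det_mxsub_perm (@hh_inj m) (@hh'_inj m)) in d0l.
have dl0 := detY ord0 ord_max hD; rewrite el0 (det_mxsub_perm (@hh'_inj m) (@hh_inj m)) in dl0.
rewrite -eB detX // d00 dll.
have -> : \det (minor B ord0 ord_max) * \det (minor B ord_max ord0)
   = (sig ord_max ord0 * \det D) * (sig ord0 ord_max * \det D).
  rewrite -d0l -dl0; apply: sgaux; exact: sign_sq.
ring.
Qed.
End DJ.
Lemma nd1 (i j : nat) : (natdist i.+1 j ^ 2 + 2 * j = 2 * i + 1 + natdist i j ^ 2)%N.
Proof. rewrite /natdist; case: ifP => ?; case: ifP => ?; nia. Qed.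
Lemma nd2 (i j : nat) : (2 * i + natdist i j.+1 ^ 2 = natdist i j ^ 2 + (2 * j + 1))%N.
Proof. rewrite /natdist; case: ifP => ?; case: ifP => ?; nia. Qed.
Lemma nd0 (i j : nat) : natdist i.+1 j.+1 = natdist i j.
Proof. by rewrite /natdist ltnS subSS. Qed.

Theorem mainTheorem15 (R : rcfType) (m : nat) (A : 'M[R]_m.+2) (q : R)
  (hq : 0 < q)
  (hden : \det (qmx q (minor1n A)) != 0) :
  \det (qmx q A) =
    (\det (qmx q (minor A ord0 ord0)) * \det (qmx q (minor A ord_max ord_max))
     - q ^+ m.+1 * \det (qmx q (minor A ord0 ord_max))
                 * \det (qmx q (minor A ord_max ord0)))
    / \det (qmx q (minor1n A)).
Proof.
set s := Num.sqrt q.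
have s0 : 0 < s by rewrite sqrtr_gt0.
have s2 : s ^+ 2 = q by rewrite sqr_sqrtr // ltW.
set B := qmx q A.
have e00 : qmx q (minor A ord0 ord0) = minor B ord0 ord0.
  by apply/matrixP => i j; rewrite !mxE !lift0 nd0.
have ell : qmx q (minor A ord_max ord_max) = minor B ord_max ord_max.
  by apply/matrixP => i j; rewrite !mxE !lift_max.
have emid : qmx q (minor1n A) = minor1n B.
  by apply/matrixP => i j; rewrite !mxE !lift_max !lift0 nd0.
have c1 : minor B ord0 ord_max *m diag_mx (\row_(j < m.+1) s ^+ (2 * j))
   = diag_mx (\row_(i < m.+1) s ^+ (2 * i + 1)%N) *m qmx q (minor A ord0 ord_max).
  rewrite mul_mx_diag mul_diag_mx; apply/matrixP => i j; rewrite !mxE !lift0 !lift_max.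
  by rewrite mulrAC -exprD nd1 exprD mulrA.
have c2 : diag_mx (\row_(i < m.+1) s ^+ (2 * i)) *m minor B ord_max ord0
   = qmx q (minor A ord_max ord0) *m diag_mx (\row_(j < m.+1) s ^+ (2 * j + 1)%N).
  rewrite mul_mx_diag mul_diag_mx; apply/matrixP => i j; rewrite !mxE !lift0 !lift_max.
  by rewrite mulrA -exprD nd2 exprD mulrAC.
set P := \prod_(i < m.+1) s ^+ (2 * i).
have hP : P != 0 by apply/prodf_neq0 => i _; rewrite expf_neq0 // gt_eqF.
have hPr : \prod_(i < m.+1) (\row_(j < m.+1) s ^+ (2 * j)) 0 i = P.
  by apply: eq_bigr => i _; rewrite mxE.
have hQr : \prod_(i < m.+1) (\row_(j < m.+1) s ^+ (2 * j + 1)%N) 0 i = P * s ^+ m.+1.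
  transitivity (P * \prod_(i < m.+1) s); last by rewrite prodr_const card_ord.
  rewrite -big_split /=.
  by apply: eq_bigr => i _; rewrite mxE exprD expr1.
have d1 := congr1 determinant c1; rewrite !det_mulmx !det_diag hPr hQr in d1.
have d2 := congr1 determinant c2; rewrite !det_mulmx !det_diag hPr hQr in d2.
have hc : q ^+ m.+1 * \det (qmx q (minor A ord0 ord_max)) * \det (qmx q (minor A ord_max ord0))
   = \det (minor B ord0 ord_max) * \det (minor B ord_max ord0).
  apply: (mulfI hP); apply: (mulfI hP).
  have hq2 : q ^+ m.+1 = s ^+ m.+1 * s ^+ m.+1.
    by rewrite -s2 -exprM -exprD; congr (_ ^+ _); lia.
  rewrite hq2.
  transitivity ((\det (minor B ord0 ord_max) * P) * (P * \det (minor B ord_max ord0))); last by ring.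
  rewrite d1 d2; ring.
rewrite e00 ell emid hc -DJ; last by rewrite -emid.
by rewrite mulfK // -emid.
Qed.
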